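(* Let $a\ge b\ge 2$ be integers and $A=\begin{pmatrix}0&a&-2\\-a&0&b\\2&-b&0\end{pmatrix}$. Then $A$ is mutation-cyclic if and only if $a=b$.
   Context: Matrix mutation: $\mu_k(B)=(b'_{ij})$ with $b'_{ij}=-b_{ij}$ if $i=k$ or $j=k$, $b'_{ij}=b_{ij}+\operatorname{sgn}(b_{ik})\max(b_{ik}b_{kj},0)$ otherwise. A $3\times3$ skew-symmetric matrix is cyclic if its quiver ($b_{ij}$ arrows $i\to j$ when $b_{ij}>0$) contains an oriented cycle; it is mutation-cyclic if every matrix obtained from it by a finite sequence of mutations is cyclic. *)

(* Defs.v *)
From mathcomp Require Import all_boot all_order all_algebra.
Set Implicit Arguments. Unset Strict Implicit. Unset Printing Implicit Defensive.
Import Order.TTheory GRing.Theory Num.Theory.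
Local Open Scope ring_scope.

Definition mutate (n : nat) (k : 'I_n) (B : 'M[int]_n) : 'M[int]_n :=
  \matrix_(i < n, j < n)
    if (i == k) || (j == k) then - B i j
    else B i j + sgz (B i k) * Num.max (B i k * B k j) 0.

Definition mutate_seq (n : nat) (ks : seq 'I_n) (B : 'M[int]_n) : 'M[int]_n :=
  foldl (fun M k => mutate k M) B ks.

Definition skew_symmetric (n : nat) (B : 'M[int]_n) : Prop :=
  forall i j, B i j = - B j i.

(* Quiver of B: b_ij arrows i -> j when b_ij > 0.  B is cyclic if the quiver
   contains an oriented cycle, i.e. a nonempty closed walk along arrows. *)
Definition quiver_arrow (n : nat) (B : 'M[int]_n) : rel 'I_n :=
  fun i j => 0 < B i j.

Definition is_cyclic (n : nat) (B : 'M[int]_n) : Prop :=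
  exists s : seq 'I_n, s != [::] /\ cycle (quiver_arrow B) s.

Definition mutation_cyclic (n : nat) (B : 'M[int]_n) : Prop :=
  forall ks : seq 'I_n, is_cyclic (mutate_seq ks B).

Definition Amat (a b : int) : 'M[int]_3 :=
  \matrix_(i < 3, j < 3)
    nth 0 (nth [::] [:: [:: 0; a; -2]; [:: -a; 0; b]; [:: 2; -b; 0]] i) j.

(* Main.v *)
Require Import Defs.
From mathcomp Require Import all_boot all_order all_algebra zify.
Import Order.TTheory GRing.Theory Num.Theory.
Local Open Scope ring_scope.

Definition mk (p q r : int) : 'M[int]_3 :=
  \matrix_(i < 3, j < 3)
    nth 0 (nth [::] [:: [:: 0; p; -r]; [:: -p; 0; q]; [:: r; -q; 0]] i) j.

Definition o0 : 'I_3 := @Ordinal 3 0 isT.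
Definition o1 : 'I_3 := @Ordinal 3 1 isT.
Definition o2 : 'I_3 := @Ordinal 3 2 isT.

Ltac ord3 i := let H := fresh in case: i => [[|[|[|?]]] H] //.

Lemma mkN p q r : mk (-p) (-q) (-r) = - mk p q r.
Proof. apply/matrixP => i j; rewrite !mxE; ord3 i; ord3 j => /=; lia. Qed.

Lemma Amat_mk a b : Amat a b = mk a b 2.
Proof. apply/matrixP => i j; rewrite !mxE; ord3 i; ord3 j. Qed.

Lemma mutateN n k (B : 'M[int]_n) : mutate k (- B) = - mutate k B.
Proof.
apply/matrixP => i j; rewrite !mxE; case: ifP => _; rewrite ?mxE //.
rewrite sgzN mulrNN mulNr opprD. done.
Qed.

Lemma mutate_seqN n ks (B : 'M[int]_n) : mutate_seq ks (- B) = - mutate_seq ks B.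
Proof. elim: ks B => //= k ks IH B; rewrite mutateN; exact: IH. Qed.

Lemma mut0 p q r : 0 < p -> 0 < r -> mutate o0 (mk p q r) = - mk p (p*r - q) r.
Proof. move=> hp hr; apply/matrixP => i j; rewrite !mxE; ord3 i; ord3 j => /=; rewrite ?mxE /=; nia. Qed.
Lemma mut1 p q r : 0 < p -> 0 < q -> mutate o1 (mk p q r) = - mk p q (p*q - r).
Proof. move=> hp hr; apply/matrixP => i j; rewrite !mxE; ord3 i; ord3 j => /=; rewrite ?mxE /=; nia. Qed.
Lemma mut2 p q r : 0 < q -> 0 < r -> mutate o2 (mk p q r) = - mk (q*r - p) q r.
Proof. move=> hp hr; apply/matrixP => i j; rewrite !mxE; ord3 i; ord3 j => /=; rewrite ?mxE /=; nia. Qed.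
Definition acyc (B : 'M[int]_3) := exists f : 'I_3 -> int, forall i j, 0 < B i j -> f i < f j.

Lemma path_pot (e : rel 'I_3) (f : 'I_3 -> int) :
  (forall i j, e i j -> f i < f j) ->
  forall p x, path e x p -> p != [::] -> f x < f (last x p).
Proof.
move=> He; elim=> // y p IH x /= /andP [exy hp] _.
case: p IH hp => [|z p] IH hp /=; first exact: He.
apply: lt_trans (He _ _ exy) _; exact: (IH y hp).
Qed.

Lemma acyc_not (B : 'M[int]_3) : acyc B -> ~ is_cyclic B.
Proof.
move=> [f Hf] [[|x s] [//= _ hc]].
have := @path_pot (quiver_arrow B) f Hf _ _ hc.
rewrite last_rcons ltxx => H; suff: false by []; apply: H; by case: s {hc}.
Qed.

Lemma mk_skew p q r i j : mk p q r i j = - mk p q r j i.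
Proof. rewrite !mxE; ord3 i; ord3 j => /=; lia. Qed.

Lemma acyc_mkN p q r : acyc (mk p q r) -> acyc (- mk p q r).
Proof.
move=> [f Hf]; exists (fun i => - f i) => i j; rewrite mxE mk_skew opprK => /Hf.
rewrite ltrN2 //.
Qed.

Lemma cyc_mk p q r : 0 < p -> 0 < q -> 0 < r -> is_cyclic (mk p q r).
Proof.
move=> hp hq hr; exists [:: o0; o1; o2]; split => //=.
rewrite /quiver_arrow !mxE /=; apply/and4P; split => //; lia.
Qed.

Lemma cyc_mkN p q r : 0 < p -> 0 < q -> 0 < r -> is_cyclic (- mk p q r).
Proof.
move=> hp hq hr; exists [:: o0; o2; o1]; split => //=.
rewrite /quiver_arrow !mxE /=; apply/and4P; split => //; lia.
Qed.

Definition PI (p q r : int) := [/\ 2 <= p, 2 <= q, 2 <= r & p^+2 + q^+2 + r^+2 - p*q*r = 4].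

Lemma PI_flip p q r : PI p q r -> PI (q*r - p) q r.
Proof.
case=> hp hq hr hC; split => //; last by rewrite !expr2 in hC *; nia.
rewrite !expr2 in hC.
have h1 : p * (q*r - p) = q*q + r*r - 4 by lia.
have h2 : 0 < q*r - p by nia.
have h3 : q*r - p != 1.
  apply/eqP => h; rewrite h mulr1 in h1.
  have : q*r - 1 = q*q + r*r - 4 by lia.
  nia.
lia.
Qed.

Definition Inv (B : 'M[int]_3) := exists p q r, PI p q r /\ (B = mk p q r \/ B = - mk p q r).

Lemma PI12 p q r : PI p q r -> PI q p r.
Proof. case=> *; split => //; lia. Qed.
Lemma PI23 p q r : PI p q r -> PI p r q.
Proof. case=> *; split => //; lia. Qed.

Lemma PI_pos p q r : PI p q r -> [/\ 0 < p, 0 < q & 0 < r].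
Proof. case=> *; split; lia. Qed.

Lemma mutPI k p q r : PI p q r ->
   exists p' q' r', PI p' q' r' /\ mutate k (mk p q r) = - mk p' q' r'.
Proof.
move=> hP; have [hp hq hr] := @PI_pos _ _ _ hP.
have : k = o0 \/ k = o1 \/ k = o2.
  ord3 k; [left|right;left|right;right]; exact: val_inj.
case=> [->|[->|->]].
- exists p, (p*r - q), r; split; last exact: mut0.
  by apply/PI12/PI_flip/PI12.
- exists p, q, (p*q - r); split; last exact: mut1.
  by apply/PI23/PI12/PI_flip/PI12/PI23.
- exists (q*r - p), q, r; split; last exact: mut2.
  exact: PI_flip.
Qed.

Lemma Inv_mut k B : Inv B -> Inv (mutate k B).
Proof.
move=> [p [q [r [hP [->|->]]]]]; have [p' [q' [r' [hP' E]]]] := @mutPI k _ _ _ hP;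
  exists p', q', r'; split => //; rewrite ?mutateN E; [right|left] => //.
by rewrite opprK.
Qed.

Lemma Inv_seq ks B : Inv B -> Inv (mutate_seq ks B).
Proof. elim: ks B => //= k ks IH B hB; apply: IH; exact: Inv_mut. Qed.

Lemma Inv_cyc B : Inv B -> is_cyclic B.
Proof.
move=> [p [q [r [hP [->|->]]]]]; have [hp hq hr] := @PI_pos _ _ _ hP.
  exact: cyc_mk. exact: cyc_mkN.
Qed.

Lemma desc n : forall u v : int, u + v <= n%:Z -> 1 <= u -> 1 <= v -> u != v ->
  exists ks x y z, mutate_seq ks (mk u v 2) = mk x y z /\ acyc (mk x y z).
Proof.
elim: n => [|n IH] u v huv hu hv hne; first lia.
have [hlt|hgt] := ltP v u.
- have E := @mut2 u v 2 ltac:(lia) ltac:(lia).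
  have [hc|hc] := leP (v*2 - u) 0.
    exists [:: o2], (u - v*2), (-v), (-2); split.
      by rewrite /= E -mkN opprB.
    exists (fun i : 'I_3 => if val i == 0%N then 0 else if val i == 2%N then 1 else 2) => i j.
    rewrite mxE; ord3 i; ord3 j => /=; lia.
  have [ks [x [y [z [E1 A1]]]]] := IH (v*2 - u) v ltac:(lia) ltac:(lia) hv ltac:(lia).
  exists (o2 :: ks), (-x), (-y), (-z); split.
    by rewrite /= E mutate_seqN E1 mkN.
  by rewrite mkN; apply: acyc_mkN.
- have E := @mut0 u v 2 ltac:(lia) ltac:(lia).
  have [hc|hc] := leP (u*2 - v) 0.
    exists [:: o0], (-u), (v - u*2), (-2); split.
      by rewrite /= E -mkN opprB.
    exists (fun i : 'I_3 => if val i == 1%N then 0 else if val i == 0%N then 1 else 2) => i j.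
    rewrite mxE; ord3 i; ord3 j => /=; lia.
  have [ks [x [y [z [E1 A1]]]]] := IH u (u*2 - v) ltac:(lia) hu ltac:(lia) ltac:(lia).
  exists (o0 :: ks), (-x), (-y), (-z); split.
    by rewrite /= E mutate_seqN E1 mkN.
  by rewrite mkN; apply: acyc_mkN.
Qed.

Theorem mainTheorem14 (a b : int) (hab : b <= a) (hb : 2 <= b) :
  mutation_cyclic (Amat a b) <-> a = b.
Proof.
split.
- move=> H; apply/eqP; apply/negPn/negP => hne.
  have [ks [x [y [z [E1 A1]]]]] := @desc (absz (a + b)) a b ltac:(lia) ltac:(lia) ltac:(lia) hne.
  apply: (@acyc_not _ A1); rewrite -E1 -Amat_mk; exact: H.
- move=> <- ks; apply: Inv_cyc; apply: Inv_seq.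
  exists a, a, 2; split; last by left; exact: Amat_mk.
  split => //; [lia | lia | rewrite !expr2; lia].
Qed.
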